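(* In the two-receiver star network (source transmitting to receivers $1,2$; at each slot, independently, the set of receivers that successfully receive is $\emptyset,\{1\},\{2\},\{1,2\}$ with probabilities $\lambda_\emptyset,\lambda_{\{1\}},\lambda_{\{2\}},\lambda_{\{1,2\}}$ summing to $1$; $A_k(n+1)=1$ if receiver $k$ receives at slot $n$ and $A_k(n+1)=A_k(n)+1$ otherwise), assume $\lambda_{\{1\}}+\lambda_{\{1,2\}}>0$ and $\lambda_{\{2\}}+\lambda_{\{1,2\}}>0$. If $(A_1,A_2)$ has the stationary distribution, then $$\mathrm{Cov}(A_1,A_2)=\frac{\lambda_\emptyset\lambda_{\{1,2\}}-\lambda_{\{1\}}\lambda_{\{2\}}}{(\lambda_{\{1\}}+\lambda_{\{1,2\}})(\lambda_{\{2\}}+\lambda_{\{1,2\}})(1-\lambda_\emptyset)}.$$ Moreover, if $(\lambda_{\{1\}}+\lambda_{\{1,2\}})(\lambda_{\{2\}}+\lambda_{\{1,2\}})=\lambda_{\{1,2\}}$, then the stationary distribution has product form, $\mathbb{P}(A_1=i,A_2=j)=\mathbb{P}(A_1=i)\mathbb{P}(A_2=j)$ for all $i,j\ge1$, and $\mathrm{Cov}(A_1,A_2)=0$; otherwise $\mathrm{Cov}(A_1,A_2)\neq0$.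
   Context: Ages take values in $\{1,2,\dots\}$. The process $(A_1(n),A_2(n))$ is a Markov chain on $\{1,2,\dots\}^2$ with a unique stationary distribution under the stated assumptions. *)

(* Defs.v *)
From Stdlib Require Import Reals Lra.
Open Scope R_scope.

(* For the
   nonnegative series used below this is the usual (order-independent) sum. *)
Definition dsum (f : nat -> nat -> R) (l : R) : Prop :=
  exists r : nat -> R, (forall i, infinite_sum (f i) (r i)) /\ infinite_sum r l.

Definition ind (b : bool) : R := if b then 1 else 0.

Definition K (l0 l1 l2 l12 : R) (a1 a2 b1 b2 : nat) : R :=
  l0 * ind (Nat.eqb b1 (S a1) && Nat.eqb b2 (S a2))
  + l1 * ind (Nat.eqb b1 1 && Nat.eqb b2 (S a2))
  + l2 * ind (Nat.eqb b1 (S a1) && Nat.eqb b2 1)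
  + l12 * ind (Nat.eqb b1 1 && Nat.eqb b2 1).

(* pi : nat -> nat -> R is a stationary distribution of the chain on
   {1,2,...}^2 (states with a zero coordinate carry no mass). *)
Definition stationary (l0 l1 l2 l12 : R) (pi : nat -> nat -> R) : Prop :=
  (forall i j, 0 <= pi i j) /\
  (forall j, pi 0%nat j = 0) /\ (forall i, pi i 0%nat = 0) /\
  dsum pi 1 /\
  (forall b1 b2, dsum (fun a1 a2 => pi a1 a2 * K l0 l1 l2 l12 a1 a2 b1 b2) (pi b1 b2)).

Definition cov_is (pi : nat -> nat -> R) (c : R) : Prop :=
  exists E1 E2 E12,
    dsum (fun i j => INR i * pi i j) E1 /\
    dsum (fun i j => INR j * pi i j) E2 /\
    dsum (fun i j => INR i * INR j * pi i j) E12 /\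
    c = E12 - E1 * E2.

(* Main.v *)
Require Import Defs.
From Stdlib Require Import Reals Lra Lia.
Open Scope R_scope.

Lemma cv_S (f : nat -> R) l : Un_cv f l -> Un_cv (fun n => f (S n)) l.
Proof. intros H e He. destruct (H e He) as [N HN]. exists N. intros n Hn. apply HN. lia. Qed.

Lemma cv_const c : Un_cv (fun _ => c) c.
Proof. intros e He. exists 0%nat. intros. unfold Rdist. rewrite Rminus_diag, Rabs_R0. lra. Qed.

Lemma cv_ext (f g : nat -> R) l : (forall n, f n = g n) -> Un_cv f l -> Un_cv g l.
Proof. intros E H e He. destruct (H e He) as [N HN]. exists N. intros n Hn. rewrite <- E. auto. Qed.

Lemma is_ext f g l : (forall n, f n = g n) -> infinite_sum f l -> infinite_sum g l.
Proof.
  intros E H. assert (forall n, sum_f_R0 f n = sum_f_R0 g n).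
  { induction n; simpl; rewrite ?IHn, E; auto. }
  apply (cv_ext (sum_f_R0 f)); auto.
Qed.

Lemma is_scal f l c : infinite_sum f l -> infinite_sum (fun n => c * f n) (c * l).
Proof.
  intros H. assert (Hc := cv_const c).
  apply (cv_ext (fun n => c * sum_f_R0 f n)).
  { intros n. rewrite scal_sum. induction n; simpl; rewrite ?IHn; ring. }
  exact (CV_mult _ _ _ _ Hc H).
Qed.

Lemma is_plus f g l m : infinite_sum f l -> infinite_sum g m ->
  infinite_sum (fun n => f n + g n) (l + m).
Proof.
  intros H1 H2. apply (cv_ext (fun n => sum_f_R0 f n + sum_f_R0 g n)).
  { intros n. rewrite plus_sum. auto. }
  exact (CV_plus _ _ _ _ H1 H2).
Qed.

Lemma is_shift f l : infinite_sum f l -> infinite_sum (fun n => f (S n)) (l - f 0%nat).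
Proof.
  intros H. apply (cv_ext (fun n => sum_f_R0 f (S n) + - f 0%nat)).
  { intros n. induction n; simpl in *. ring. rewrite <- IHn. ring. }
  apply CV_plus. apply cv_S; exact H. apply cv_const.
Qed.

Lemma is_unshift f l : infinite_sum (fun n => f (S n)) l -> infinite_sum f (f 0%nat + l).
Proof.
  intros H. intros e He. destruct (H e He) as [N HN]. exists (S N). intros n Hn.
  destruct n as [|n]. lia.
  replace (sum_f_R0 f (S n)) with (f 0%nat + sum_f_R0 (fun k => f (S k)) n).
  2:{ clear. induction n; simpl in *. ring. rewrite <- IHn. ring. }
  unfold Rdist. replace (f 0%nat + sum_f_R0 (fun k : nat => f (S k)) n - (f 0%nat + l))
    with (sum_f_R0 (fun k : nat => f (S k)) n - l) by ring. apply HN. lia.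
Qed.

Lemma is_zero : infinite_sum (fun _ => 0) 0.
Proof. apply (cv_ext (fun _ => 0)). intros n; induction n; simpl; rewrite <- ?IHn; ring. apply cv_const. Qed.

Lemma is_point f k : (forall n, n <> k -> f n = 0) -> infinite_sum f (f k).
Proof.
  intros Hz e He. exists k. intros n Hn.
  assert (sum_f_R0 f n = f k).
  { induction n.
    - assert (k = 0%nat) by lia. subst. reflexivity.
    - destruct (Nat.eq_dec (S n) k).
      + subst. simpl. assert (sum_f_R0 f n = 0).
        { clear IHn Hn. assert (forall m, (m <= n)%nat -> sum_f_R0 f m = 0).
          { induction m; intros; simpl. apply Hz; lia. rewrite IHm by lia. rewrite Hz by lia. ring. }
          apply H; lia. }
        rewrite H; ring.
      + simpl. rewrite IHn by lia. rewrite (Hz (S n)) by auto. ring. }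
  rewrite H. unfold Rdist. rewrite Rminus_diag, Rabs_R0. lra.
Qed.

Lemma rec_sum (u v : nat -> R) V b : 0 <= b < 1 -> (forall n, 0 <= u n) -> (forall n, 0 <= v n) ->
  infinite_sum v V -> (forall n, u (S n) = v n + b * u n) ->
  infinite_sum u ((u 0%nat + V) / (1 - b)).
Proof.
  intros Hb Hu Hv HV Hrec.
  set (U := sum_f_R0 u).
  assert (HUS : forall n, U (S n) = u 0%nat + sum_f_R0 v n + b * U n).
  { intros n. unfold U. induction n; simpl in *. rewrite Hrec. ring.
    rewrite (Hrec (S n)). lra. }
  assert (Hg : Un_growing U). { intros n. unfold U. simpl. specialize (Hu (S n)). lra. }
  assert (HVle : forall n, sum_f_R0 v n <= V).
  { apply growing_ineq; auto. intros n; simpl; specialize (Hv (S n)); lra. }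
  assert (HV0 : 0 <= V). { specialize (HVle 0%nat). specialize (Hv 0%nat). simpl in HVle. lra. }
  assert (Hbd : forall n, U n <= (u 0%nat + V) / (1 - b)).
  { intros n. apply Rmult_le_reg_r with (1 - b). lra. unfold Rdiv. rewrite Rmult_assoc, Rinv_l by lra.
    destruct n. unfold U; simpl. specialize (Hu 0%nat). nra.
    specialize (Hg n). unfold Un_growing in Hg. rewrite HUS in *. specialize (HVle n).
    assert (U n * (1 - b) <= u 0%nat + sum_f_R0 v n) by lra. nra. }
  destruct (growing_cv U Hg) as [L HL].
  { exists ((u 0%nat + V) / (1 - b)). intros x [i ->]. apply Hbd. }
  assert (H1 : Un_cv (fun n => U (S n)) L) by (apply cv_S; auto).
  assert (H2 : Un_cv (fun n => U (S n)) (u 0%nat + V + b * L)).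
  { apply (cv_ext (fun n => (u 0%nat + sum_f_R0 v n) + b * U n)).
    intros; rewrite HUS; ring.
    apply CV_plus. apply CV_plus. apply cv_const. exact HV.
    apply CV_mult. apply cv_const. exact HL. }
  assert (E := UL_sequence _ _ _ H1 H2).
  replace ((u 0%nat + V) / (1 - b)) with L. exact HL.
  field_simplify_eq. lra. lra.
Qed.

Lemma is_nonneg f l : (forall n, 0 <= f n) -> infinite_sum f l -> 0 <= l.
Proof.
  intros Hf H. assert (Hg : Un_growing (sum_f_R0 f)). { intros n; simpl; specialize (Hf (S n)); lra. }
  pose proof (growing_ineq _ _ Hg H 0%nat). simpl in H0. specialize (Hf 0%nat). lra.
Qed.

Lemma is_ext' f g l : infinite_sum f l -> (forall n, f n = g n) -> infinite_sum g l.
Proof. intros; eapply is_ext; eauto. Qed.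

Lemma is_eqv f l m : infinite_sum f l -> l = m -> infinite_sum f m.
Proof. intros H ->; exact H. Qed.

Lemma dsum_col (F : nat -> nat -> R) L (g : nat -> nat) :
  (forall a1 a2, a2 <> g a1 -> F a1 a2 = 0) -> dsum F L -> infinite_sum (fun a1 => F a1 (g a1)) L.
Proof.
  intros Hz [r [Hr HL]]. apply (is_ext r); auto. intros n.
  apply (uniqueness_sum (F n)); auto. apply is_point. intros m Hm; apply Hz; auto.
Qed.

Lemma dsum_row (F : nat -> nat -> R) L k :
  (forall a1 a2, a1 <> k -> F a1 a2 = 0) -> dsum F L -> infinite_sum (F k) L.
Proof.
  intros Hz [r [Hr HL]].
  assert (Hr0 : forall n, n <> k -> r n = 0).
  { intros n Hn. apply (uniqueness_sum (F n)); auto. apply (is_ext (fun _ => 0)).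
    intros m; symmetry; apply Hz; auto. apply is_zero. }
  pose proof (is_point r k Hr0) as Hp. rewrite (uniqueness_sum _ _ _ HL Hp). auto.
Qed.

Lemma dsum_val (F : nat -> nat -> R) L r M :
  dsum F L -> (forall i, infinite_sum (F i) (r i)) -> infinite_sum r M -> L = M.
Proof.
  intros [r' [Hr' HL]] Hr HM. apply (uniqueness_sum r'); auto. apply (is_ext r); auto.
  intros n; apply (uniqueness_sum (F n)); auto.
Qed.

Ltac kcase := unfold K, Defs.ind;
  repeat match goal with |- context [Nat.eqb ?x ?y] => destruct (Nat.eqb_spec x y) end; simpl; try (exfalso; lia).

Lemma geo q : 0 <= q < 1 -> infinite_sum (fun n => q ^ n) (1 / (1 - q)).
Proof.
  intros Hq. apply is_eqv with ((1 + 0) / (1 - q)).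
  apply (rec_sum (fun n => q ^ n) (fun _ => 0)); auto.
  intros; apply pow_le; lra. intros; lra. apply is_zero. intros; simpl; ring.
  f_equal; ring.
Qed.

Lemma geo2 q : 0 <= q < 1 -> infinite_sum (fun n => (INR n + 2) * q ^ n) ((2 + q / (1 - q)) / (1 - q)).
Proof.
  intros Hq. apply is_eqv with (((INR 0 + 2) * q ^ 0 + q / (1 - q)) / (1 - q)).
  apply (rec_sum (fun n => (INR n + 2) * q ^ n) (fun n => q ^ (S n))); auto.
  intros; apply Rmult_le_pos. pose proof (pos_INR n); lra. apply pow_le; lra.
  intros; apply pow_le; lra.
  apply is_eqv with (1 / (1 - q) - q ^ 0). apply (is_shift (fun n => q ^ n)). apply geo; auto.
  simpl; field; lra.
  intros; rewrite S_INR; simpl; ring.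
  simpl; f_equal; ring.
Qed.

Fixpoint sm (a b S1 : R) (r : nat -> R) (n : nat) : R :=
  match n with 0%nat => 0 | S k => match k with 0%nat => S1 | S _ => a * r k + b * sm a b S1 r k end end.

Theorem mainTheorem3 (l0 l1 l2 l12 : R) (pi : nat -> nat -> R) :
  0 <= l0 -> 0 <= l1 -> 0 <= l2 -> 0 <= l12 ->
  l0 + l1 + l2 + l12 = 1 ->
  l1 + l12 > 0 -> l2 + l12 > 0 ->
  stationary l0 l1 l2 l12 pi ->
  cov_is pi ((l0 * l12 - l1 * l2) / ((l1 + l12) * (l2 + l12) * (1 - l0))) /\
  ((l1 + l12) * (l2 + l12) = l12 ->
     (forall i j (m1 m2 : R), (1 <= i)%nat -> (1 <= j)%nat ->
        infinite_sum (fun j' => pi i j') m1 ->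
        infinite_sum (fun i' => pi i' j) m2 ->
        pi i j = m1 * m2) /\
     cov_is pi 0) /\
  ((l1 + l12) * (l2 + l12) <> l12 ->
     exists c, cov_is pi c /\ c <> 0).
Proof.
  intros H0 H1 H2 H12 Hsum Hp1 Hp2 [Hpos [Hz1 [Hz2 [[r [Hr Hr1]] Hst]]]].
  assert (F11 : pi 1%nat 1%nat = l12).
  { pose proof (Hst 1%nat 1%nat) as D.
    apply (dsum_val _ _ (fun i => l12 * r i) (l12 * 1)) in D.
    lra.
    intros i. apply (is_ext (fun j => l12 * pi i j)). 2: apply is_scal; auto.
    intros j. destruct i, j; kcase; rewrite ?Hz1, ?Hz2; try ring.
    apply is_scal; auto. }
  assert (F1c : forall j, infinite_sum (fun a => l1 * pi a (S j)) (pi 1%nat (S (S j)))).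
  { intros j. assert (Z : forall a1 a2, a2 <> S j -> pi a1 a2 * K l0 l1 l2 l12 a1 a2 1 (S (S j)) = 0).
    { intros a1 a2 Hne; kcase; try ring. }
    pose proof (dsum_col (fun a1 a2 => pi a1 a2 * K l0 l1 l2 l12 a1 a2 1 (S (S j))) _ (fun _ => S j) Z (Hst 1%nat (S (S j)))) as D.
    apply (is_ext' _ _ _ D); simpl.
    intros a; destruct a; kcase; rewrite ?Hz1; try ring; try (exfalso; lia). }
  assert (Fr1 : forall i, infinite_sum (fun a => l2 * pi (S i) a) (pi (S (S i)) 1%nat)).
  { intros i. assert (Z : forall a1 a2, a1 <> S i -> pi a1 a2 * K l0 l1 l2 l12 a1 a2 (S (S i)) 1 = 0).
    { intros a1 a2 Hne; kcase; try ring. }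
    pose proof (dsum_row (fun a1 a2 => pi a1 a2 * K l0 l1 l2 l12 a1 a2 (S (S i)) 1) _ (S i) Z (Hst (S (S i)) 1%nat)) as D.
    apply (is_ext' _ _ _ D); simpl.
    intros a; destruct a; kcase; rewrite ?Hz2; try ring. }
  assert (Fd : forall i j, pi (S (S i)) (S (S j)) = l0 * pi (S i) (S j)).
  { intros i j. assert (Z : forall a1 a2, a2 <> S j -> pi a1 a2 * K l0 l1 l2 l12 a1 a2 (S (S i)) (S (S j)) = 0).
    { intros a1 a2 Hne; kcase; try ring. }
    pose proof (dsum_col (fun a1 a2 => pi a1 a2 * K l0 l1 l2 l12 a1 a2 (S (S i)) (S (S j))) _ (fun _ => S j) Z (Hst (S (S i)) (S (S j)))) as D.
    simpl in D. assert (Z2 : forall n, n <> S i -> pi n (S j) * K l0 l1 l2 l12 n (S j) (S (S i)) (S (S j)) = 0).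
    { intros n Hn; kcase; ring. }
    rewrite (uniqueness_sum _ _ _ D (is_point _ (S i) Z2)).
    kcase; ring. }
  assert (r0 : r 0%nat = 0).
  { apply (uniqueness_sum (pi 0%nat)); auto. apply (is_ext (fun _ => 0)). intros; rewrite Hz1; auto. apply is_zero. }
  assert (rnn : forall i, 0 <= r i). { intros i; apply (is_nonneg (pi i)); auto. }
  assert (Frow : forall i j, pi (S (S i)) (S j) = l0 * pi (S i) j + (match j with 0%nat => l2 * r (S i) | S _ => 0 end)).
  { intros i [|j]. rewrite Hz2. rewrite (uniqueness_sum _ _ _ (Fr1 i) (is_scal _ _ l2 (Hr (S i)))). ring.
    rewrite Fd. ring. }
  assert (rowS : forall i, infinite_sum (fun n => pi (S (S i)) (S n)) (l0 * r (S i) + l2 * r (S i))).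
  { intros i. apply (is_ext (fun n => l0 * pi (S i) n + (match n with 0%nat => l2 * r (S i) | S _ => 0 end))).
    intros n; rewrite Frow; auto.
    apply is_plus. apply is_scal; auto.
    apply (is_point (fun n => match n with 0%nat => l2 * r (S i) | S _ => 0 end) 0%nat).
    intros [|n] Hn; [lia|auto]. }
  assert (rrec : forall i, r (S (S i)) = (l0 + l2) * r (S i)).
  { intros i. pose proof (is_unshift _ _ (rowS i)) as D. rewrite Hz2 in D.
    rewrite (uniqueness_sum _ _ _ (Hr (S (S i))) D). ring. }
  assert (r1 : r 1%nat = l1 + l12).
  { assert (D : infinite_sum (fun n => r (S n)) ((r 1%nat + 0) / (1 - (l0 + l2)))).
    { apply (rec_sum (fun n => r (S n)) (fun _ => 0) 0 (l0 + l2)). lra. intros; apply rnn. intros; lra. apply is_zero. intros; rewrite rrec; ring. }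
    pose proof (is_shift _ _ Hr1) as D2. pose proof (uniqueness_sum _ _ _ D2 D) as E1.
    rewrite r0 in E1. simpl in E1.
    assert (E : 1 - (l0 + l2) = l1 + l12) by lra. rewrite E in E1.
    apply (f_equal (fun x => x * (l1 + l12))) in E1. field_simplify in E1. lra. lra. }
  assert (rexp : forall i, r (S i) = (l1 + l12) * (l0 + l2) ^ i).
  { induction i. simpl; rewrite r1; ring. rewrite rrec, IHi; simpl; ring. }
  assert (Fcol : forall j, infinite_sum (fun i => pi i (S j)) ((l2 + l12) * (l0 + l1) ^ j)).
  { induction j.
    - assert (A : infinite_sum (fun n => pi (S (S n)) 1%nat) (l2 * (1 - r 0%nat))).
      { apply (is_ext (fun n => l2 * r (S n))). intros n; rewrite Frow, Hz2; ring.
        apply is_scal. apply (is_shift r); auto. }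
      pose proof (is_unshift (fun n => pi (S n) 1%nat) _ A) as B.
      pose proof (is_unshift (fun n => pi n 1%nat) _ B) as C.
      apply (is_eqv _ _ _ C). simpl. rewrite Hz1, F11, r0. ring.
    - assert (E1 : pi 1%nat (S (S j)) = l1 * ((l2 + l12) * (l0 + l1) ^ j)).
      { apply (uniqueness_sum _ _ _ (F1c j)). apply is_scal; auto. }
      assert (A : infinite_sum (fun n => pi (S (S n)) (S (S j))) (l0 * ((l2 + l12) * (l0 + l1) ^ j - pi 0%nat (S j)))).
      { apply (is_ext (fun n => l0 * pi (S n) (S j))). intros n; rewrite Fd; ring.
        apply is_scal. apply (is_shift (fun i => pi i (S j))); auto. }
      pose proof (is_unshift (fun n => pi (S n) (S (S j))) _ A) as B.
      pose proof (is_unshift (fun n => pi n (S (S j))) _ B) as C.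
      apply (is_eqv _ _ _ C). simpl. rewrite !Hz1, E1. ring. }
  assert (row1 : forall j, pi 1%nat (S (S j)) = l1 * ((l2 + l12) * (l0 + l1) ^ j)).
  { intros j. apply (uniqueness_sum _ _ _ (F1c j)). apply is_scal; auto. }
  assert (Eq2 : 1 - (l0 + l1) = l2 + l12) by lra.
  assert (Eq1 : 1 - (l0 + l2) = l1 + l12) by lra.
  assert (Hq2 : 0 <= l0 + l1 < 1) by lra.
  assert (Hq1 : 0 <= l0 + l2 < 1) by lra.
  assert (Hl0 : 0 <= l0 < 1) by lra.
  set (S1 := l12 + l1 * (2 + (l0 + l1) / (l2 + l12))).
  set (s := sm (l0 + l2) l0 S1 r).
  assert (Hs1 : infinite_sum (fun j => INR j * pi 1%nat j) S1).
  { assert (A : infinite_sum (fun n => INR (S (S n)) * pi 1%nat (S (S n)))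
        (l1 * (l2 + l12) * ((2 + (l0 + l1) / (1 - (l0 + l1))) / (1 - (l0 + l1))))).
    { apply (is_ext (fun n => l1 * (l2 + l12) * ((INR n + 2) * (l0 + l1) ^ n))).
      intros n; cbv beta; rewrite row1, !S_INR. generalize (INR n) ((l0+l1)^n); intros. ring.
      apply is_scal. apply geo2; auto. }
    pose proof (is_unshift (fun n => INR (S n) * pi 1%nat (S n)) _ A) as B.
    pose proof (is_unshift (fun n => INR n * pi 1%nat n) _ B) as C.
    apply (is_eqv _ _ _ C). rewrite Eq2. simpl. rewrite Hz2, F11. unfold S1. field. lra. }
  assert (Hs : forall i, infinite_sum (fun j => INR j * pi (S i) j) (s (S i))).
  { induction i. exact Hs1.
    assert (A : infinite_sum (fun n => INR (S n) * pi (S (S i)) (S n))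
        (l0 * s (S i) + l0 * r (S i) + l2 * r (S i))).
    { apply (is_ext (fun n => l0 * (INR n * pi (S i) n) + l0 * pi (S i) n +
                        (match n with 0%nat => l2 * r (S i) | S _ => 0 end))).
      intros n; cbv beta; rewrite Frow; destruct n; [simpl; ring | rewrite (S_INR (S n)); ring].
      apply is_plus. apply is_plus. apply is_scal; auto. apply is_scal; auto.
      apply (is_point (fun n => match n with 0%nat => l2 * r (S i) | S _ => 0 end) 0%nat).
      intros [|n] Hn; [lia|auto]. }
    pose proof (is_unshift (fun n => INR n * pi (S (S i)) n) _ A) as C.
    apply (is_eqv _ _ _ C). unfold s; simpl. rewrite Hz2. ring. }
  assert (Hrow2 : forall i, infinite_sum (fun j => INR j * pi i j) (s i)).
  { intros [|i]. apply (is_ext (fun _ => 0)). intros; rewrite Hz1; ring. apply is_zero. apply Hs. }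
  assert (snn : forall i, 0 <= s i).
  { intros i. apply (is_nonneg _ _ (fun j => Rmult_le_pos _ _ (pos_INR j) (Hpos i j)) (Hrow2 i)). }
  assert (D1 : infinite_sum (fun n => INR (S n) * r (S n)) ((INR 1 * r 1%nat + (l0 + l2) * (1 - r 0%nat)) / (1 - (l0 + l2)))).
  { apply (rec_sum (fun n => INR (S n) * r (S n)) (fun n => (l0 + l2) * r (S n)) ((l0 + l2) * (1 - r 0%nat)) (l0 + l2)).
    lra. intros; apply Rmult_le_pos; [apply pos_INR | apply rnn].
    intros; apply Rmult_le_pos; [lra | apply rnn].
    apply is_scal. apply (is_shift r); auto.
    intros n. rewrite rrec, (S_INR (S n)). ring. }
  assert (D2 : infinite_sum (fun n => s (S n)) ((s 1%nat + (l0 + l2) * (1 - r 0%nat)) / (1 - l0))).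
  { apply (rec_sum (fun n => s (S n)) (fun n => (l0 + l2) * r (S n)) ((l0 + l2) * (1 - r 0%nat)) l0).
    lra. intros; apply snn.
    intros; apply Rmult_le_pos; [lra | apply rnn].
    apply is_scal. apply (is_shift r); auto.
    intros n. reflexivity. }
  assert (D3 : infinite_sum (fun n => INR (S n) * s (S n))
     ((INR 1 * s 1%nat + (l0 * ((s 1%nat + (l0 + l2) * (1 - r 0%nat)) / (1 - l0)) + (l0 + l2) * (1 - r 0%nat)
        + (l0 + l2) * ((INR 1 * r 1%nat + (l0 + l2) * (1 - r 0%nat)) / (1 - (l0 + l2))))) / (1 - l0))).
  { apply (rec_sum (fun n => INR (S n) * s (S n))
       (fun n => l0 * s (S n) + (l0 + l2) * r (S n) + (l0 + l2) * (INR (S n) * r (S n)))).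
    lra. intros; apply Rmult_le_pos; [apply pos_INR | apply snn].
    intros; pose proof (rnn (S n)); pose proof (snn (S n)); pose proof (pos_INR (S n));
      assert (0 <= INR (S n) * r (S n)) by (apply Rmult_le_pos; lra); nra.
    apply is_plus. apply is_plus. apply is_scal; auto. apply is_scal; apply (is_shift r); auto.
    apply is_scal; auto.
    intros n. change (s (S (S n))) with ((l0 + l2) * r (S n) + l0 * s (S n)). rewrite (S_INR (S n)). ring. }
  assert (Hcov : cov_is pi ((l0 * l12 - l1 * l2) / ((l1 + l12) * (l2 + l12) * (1 - l0)))).
  { eexists _, _, _. split; [|split; [|split]].
    - exists (fun i => INR i * r i). split. intros; apply is_scal; auto.
      apply (is_unshift (fun n => INR n * r n)); exact D1.
    - exists s. split. exact Hrow2. apply (is_unshift s); exact D2.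
    - exists (fun i => INR i * s i). split.
      intros i. apply (is_ext' _ _ _ (is_scal _ _ (INR i) (Hrow2 i))). intros; ring.
      apply (is_unshift (fun n => INR n * s n)); exact D3.
    - unfold s; simpl sm. rewrite r0, r1. unfold S1. simpl INR.
      assert (El0 : l0 = 1 - l1 - l2 - l12) by lra. clear - El0 Hp1 Hp2 H1 H2 H12.
      subst l0. field. repeat split; lra. }
  assert (Num : l0 * l12 - l1 * l2 = l12 - (l1 + l12) * (l2 + l12)).
  { assert (El0 : l0 = 1 - l1 - l2 - l12) by lra. rewrite El0. ring. }
  assert (Den : (l1 + l12) * (l2 + l12) * (1 - l0) <> 0).
  { apply Rgt_not_eq. apply Rmult_lt_0_compat. apply Rmult_lt_0_compat; lra. lra. }
  split. exact Hcov. split.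
  - intros Hprod.
    assert (K1 : l1 = (l1 + l12) * (l0 + l1)).
    { replace (l0 + l1) with (1 - (l2 + l12)) by lra. nra. }
    assert (K2 : l2 = (l2 + l12) * (l0 + l2)).
    { replace (l0 + l2) with (1 - (l1 + l12)) by lra. nra. }
    assert (K3 : l0 = (l0 + l2) * (l0 + l1)).
    { replace (l0 + l2) with (1 - (l1 + l12)) by lra. replace (l0 + l1) with (1 - (l2 + l12)) by lra. nra. }
    split.
    + intros i j m1 m2 Hi Hj Hm1 Hm2. destruct i as [|i]; [lia|]. destruct j as [|j]; [lia|].
      rewrite (uniqueness_sum _ _ _ Hm1 (Hr (S i))), (uniqueness_sum _ _ _ Hm2 (Fcol j)), rexp.
      clear Hj Hi Hm1 Hm2. revert j. induction i as [|i IH]; intros [|j].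
      * rewrite F11. simpl. nra.
      * rewrite row1. transitivity ((l1 + l12) * (l0 + l1) * ((l2 + l12) * (l0 + l1) ^ j)).
        rewrite <- K1; reflexivity. simpl; ring.
      * rewrite Frow, Hz2, rexp. transitivity (l0 * 0 + (l2 + l12) * (l0 + l2) * ((l1 + l12) * (l0 + l2) ^ i)).
        rewrite <- K2; reflexivity. simpl; ring.
      * rewrite Fd, IH. transitivity ((l0 + l2) * (l0 + l1) * ((l1 + l12) * (l0 + l2) ^ i * ((l2 + l12) * (l0 + l1) ^ j))).
        rewrite <- K3; reflexivity. simpl; ring.
    + rewrite Num, Hprod in Hcov. replace ((l12 - l12) / (l12 * (1 - l0))) with 0 in Hcov.
      exact Hcov. unfold Rdiv; ring.
  - intros Hne. eexists; split. exact Hcov. intros Hc. apply Hne.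
    assert (E : l0 * l12 - l1 * l2 = 0).
    { replace (l0 * l12 - l1 * l2) with ((l0 * l12 - l1 * l2) / ((l1 + l12) * (l2 + l12) * (1 - l0)) * ((l1 + l12) * (l2 + l12) * (1 - l0))).
      rewrite Hc; ring. field. repeat split; lra. }
    lra.
Qed.
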